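(* Let $k\ge 2$ and let $\mathcal{S}=\{\mathcal{S}_1,\ldots,\mathcal{S}_{q^k+1}\}$ be a $k$-spread of $\mathbb{F}_q^{2k}$. For each $i$ let $\mathrm{S}_i$ be a full-rank $k\times 2k$ matrix over $\mathbb{F}_q$ with row space $\mathcal{S}_i$. Define the $2k\times 2k$ matrices $\mathrm{W}_i=\begin{pmatrix}\mathrm{S}_i\\ \mathrm{S}_{i+1}\end{pmatrix}$ for $i=1,\ldots,q^k$ and $\mathrm{W}_{q^k+1}=\begin{pmatrix}\mathrm{S}_{q^k+1}\\ \mathrm{S}_1\end{pmatrix}$, and for $1\le j\le 2k-1$ let $\mathcal{W}_i^{(j)}$ be the row space of the first $j$ rows of $\mathrm{W}_i$. Then for every $1\le j\le 2k-1$ the set $\mathcal{C}_j=\{\mathcal{W}_i^{(j)} : i=1,\ldots,q^k+1\}$ is a set of $j$-dimensional subspaces of $\mathbb{F}_q^{2k}$ with $|\mathcal{C}_j|=|\mathcal{S}|$. Moreover: (1) for $1\le j\le k$, $\mathcal{C}_j$ is a partial spread, i.e. distinct elements intersect trivially; (2) for $k<j\le 2k-1$, any two distinct elements of $\mathcal{C}_j$ intersect in a subspace of dimension exactly $2(j-k)$, so that the subspace distance between any two distinct elements of $\mathcal{C}_j$ is $2(2k-j)$, the maximum possible distance between two $j$-dimensional subspaces of $\mathbb{F}_q^{2k}$.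
   Context: $q$ is a prime power. A $k$-spread of $\mathbb{F}_q^{2k}$ (planar spread) is a set of $k$-dimensional subspaces of $\mathbb{F}_q^{2k}$ pairwise intersecting trivially with cardinality $q^k+1$; any two distinct members then sum to $\mathbb{F}_q^{2k}$. The subspace distance is $d_S(\mathcal{U},\mathcal{V})=\dim(\mathcal{U}+\mathcal{V})-\dim(\mathcal{U}\cap\mathcal{V})$. *)

(* Defs.v *)
From HB Require Import structures.
From mathcomp Require Import all_boot all_order all_algebra all_field.
Set Implicit Arguments. Unset Strict Implicit. Unset Printing Implicit Defensive.
Import GRing.Theory.
Local Open Scope ring_scope.

(* Subspaces of F^n are represented (mxalgebra style) by matrices via their
   row spaces: \rank A = dimension, (A :&: B)%MS = intersection, (A + B)%MS = sum. *)

Definition subspace_dist (F : fieldType) (m1 m2 n : nat)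
  (U : 'M[F]_(m1, n)) (V : 'M[F]_(m2, n)) : nat :=
  (\rank (U + V)%MS - \rank (U :&: V)%MS)%N.

(* The matrix made of the first j rows of A (meaningful for j <= m). *)
Definition firstrows (F : fieldType) (m n : nat) (j : nat) (A : 'M[F]_(m, n))
  : 'M[F]_(j, n) :=
  \matrix_(r < j, c < n) \sum_(i < m | (i : nat) == (r : nat)) A i c.

Definition is_spread_mx (F : finFieldType) (k : nat)
  (S : 'I_((#|F| ^ k).+1) -> 'M[F]_(k, 2 * k)) : Prop :=
  (forall i, \rank (S i) = k) /\
  (forall i i', i != i' -> \rank (S i :&: S i')%MS = 0%N).

Definition Wmx (F : finFieldType) (k : nat)
  (S : 'I_((#|F| ^ k).+1) -> 'M[F]_(k, 2 * k)) (i : 'I_((#|F| ^ k).+1))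
  : 'M[F]_(k + k, 2 * k) :=
  col_mx (S i) (S (ordS i)).

Definition Wj (F : finFieldType) (k : nat)
  (S : 'I_((#|F| ^ k).+1) -> 'M[F]_(k, 2 * k)) (j : nat) (i : 'I_((#|F| ^ k).+1))
  : 'M[F]_(j, 2 * k) :=
  firstrows j (Wmx S i).

(* Main.v *)
Require Import Defs.
From HB Require Import structures.
From mathcomp Require Import all_boot all_order all_algebra all_field.
From mathcomp Require Import zify.
Import GRing.Theory.
Local Open Scope ring_scope.

Lemma firstrows_row (F : fieldType) m n j (A : 'M[F]_(m, n)) (h : (j <= m)%N)
  (r : 'I_j) : row r (firstrows j A) = row (widen_ord h r) A.
Proof.
apply/rowP => c; rewrite !mxE (big_pred1 (widen_ord h r)) //.

Qed.

Lemma firstrows_sub (F : fieldType) m n j (A : 'M[F]_(m, n)) :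
  (j <= m)%N -> (firstrows j A <= A)%MS.
Proof.
move=> h; apply/row_subP => r; rewrite (firstrows_row _ _ _ _ _ h); exact: row_sub.
Qed.

Lemma rank_firstrows (F : fieldType) m n j (A : 'M[F]_(m, n)) :
  (j <= m)%N -> \rank A = m -> \rank (firstrows j A) = j.
Proof.
move=> h rA; apply/eqP; rewrite eqn_leq rank_leq_row /=.
set B := firstrows j A.
have hC : forall r : 'I_(m - j), (r + j < m)%N.
  by move=> r; have := ltn_ord r; lia.
set C : 'M[F]_(m - j, n) := \matrix_(r, c) A (Ordinal (hC r)) c.
have sA : (A <= B + C)%MS.
  apply/row_subP => i; case: (ltnP i j) => hi.
    apply: submx_trans (addsmxSl B C).
    have -> : row i A = row (Ordinal hi) B.
      by rewrite /B (firstrows_row _ _ _ _ _ h); congr row; apply: val_inj.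
    exact: row_sub.
  apply: submx_trans (addsmxSr B C).
  have hi' : (i - j < m - j)%N by have := ltn_ord i; lia.
  have -> : row i A = row (Ordinal hi') C.
    apply/rowP => c; rewrite !mxE; congr (A _ c); apply: val_inj => /=; lia.
  exact: row_sub.
have := mxrankS sA; rewrite rA.
case: (mxrank_adds_leqif B C) => le _.
have := rank_leq_row C; lia.
Qed.

Lemma firstrows_col_sub (F : fieldType) k n j (X Y : 'M[F]_(k, n)) :
  (j <= k)%N -> (firstrows j (col_mx X Y) <= X)%MS.
Proof.
move=> h; have h2 : (j <= k + k)%N by lia.
apply/row_subP => r; rewrite (firstrows_row _ _ _ _ _ h2).
have hr : (r < k)%N by have := ltn_ord r; lia.
have -> : widen_ord h2 r = lshift k (Ordinal hr) by apply: val_inj.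
rewrite rowKu; exact: row_sub.
Qed.

Lemma col_firstrows_sub (F : fieldType) k n j (X Y : 'M[F]_(k, n)) :
  (k <= j <= k + k)%N -> (X <= firstrows j (col_mx X Y))%MS.
Proof.
case/andP => h1 h2.
apply/row_subP => r.
have hr : (r < j)%N by have := ltn_ord r; lia.
have -> : row r X = row (Ordinal hr) (firstrows j (col_mx X Y)).
  rewrite (firstrows_row _ _ _ _ _ h2).
  have -> : widen_ord h2 (Ordinal hr) = lshift k r by apply: val_inj.
  by rewrite rowKu.
exact: row_sub.
Qed.

Lemma ordS_neq n (i : 'I_n) : (1 < n)%N -> ordS i != i.
Proof.
move=> hn; rewrite -val_eqE /=.
case: (ltnP i.+1 n) => h.
  by rewrite modn_small // gtn_eqF.
have e : i.+1 = n by have := ltn_ord i; lia.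
by rewrite e modnn; apply/eqP => E; move: e; rewrite -E; lia.
Qed.

Theorem proposition4p3 (F : finFieldType) (k : nat) (hk : (2 <= k)%N)
  (S : 'I_((#|F| ^ k).+1) -> 'M[F]_(k, 2 * k))
  (hS : is_spread_mx S) :
  forall j : nat, (1 <= j <= 2 * k - 1)%N ->
    (* each W_i^{(j)} is j-dimensional *)
    (forall i, \rank (Wj S j i) = j) /\
    (* |C_j| = |S| *)
    #|[set <<Wj S j i>>%MS | i : 'I_((#|F| ^ k).+1)]| = (#|F| ^ k).+1 /\
    (* (1) partial spread *)
    ((j <= k)%N -> forall i i', i != i' ->
       \rank (Wj S j i :&: Wj S j i')%MS = 0%N) /\
    (* (2) intersections of dimension 2(j-k), distance 2(2k-j), which is maximal *)
    ((k < j)%N ->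
       (forall i i', i != i' ->
          \rank (Wj S j i :&: Wj S j i')%MS = (2 * (j - k))%N /\
          subspace_dist (Wj S j i) (Wj S j i') = (2 * (2 * k - j))%N) /\
       (forall U V : 'M[F]_(j, 2 * k), \rank U = j -> \rank V = j ->
          (subspace_dist U V <= 2 * (2 * k - j))%N)).
Proof.
case: hS => rS capS j hj.
have hn : (1 < (#|F| ^ k).+1)%N by rewrite ltnS expn_gt0 (cardD1 0).
have sumS : forall i i', i != i' -> \rank (S i + S i')%MS = (2 * k)%N.
  move=> i i' ne; have := mxrank_sum_cap (S i) (S i').
  rewrite capS // !rS; lia.
have rW : forall i, \rank (Wmx S i) = (k + k)%N.
  move=> i; rewrite /Wmx -addsmxE sumS; first lia.
  by rewrite eq_sym ordS_neq.
have rWj : forall i, \rank (Wj S j i) = j.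
  move=> i; rewrite /Wj rank_firstrows //; lia.
have part1 : (j <= k)%N -> forall i i', i != i' ->
       \rank (Wj S j i :&: Wj S j i')%MS = 0%N.
  move=> hjk i i' ne; apply/eqP; rewrite -leqn0.
  apply: leq_trans (_ : _ <= \rank (S i :&: S i')%MS)%N _; last by rewrite capS.
  apply: mxrankS; apply: capmxS; exact: firstrows_col_sub.
have part2 : (k < j)%N -> forall i i', i != i' ->
          \rank (Wj S j i :&: Wj S j i')%MS = (2 * (j - k))%N /\
          subspace_dist (Wj S j i) (Wj S j i') = (2 * (2 * k - j))%N.
  move=> hjk i i' ne.
  have hs : \rank (Wj S j i + Wj S j i')%MS = (2 * k)%N.
    apply/eqP; rewrite eqn_leq rank_leq_col /=.
    apply: leq_trans (_ : _ <= \rank (S i + S i')%MS)%N _; first by rewrite sumS.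
    apply: mxrankS; apply: addsmxS; apply: col_firstrows_sub; lia.
  have := mxrank_sum_cap (Wj S j i) (Wj S j i'); rewrite hs !rWj => e.
  rewrite /subspace_dist hs; lia.
split => //; split; last first.
  split => // hjk; split; first exact: part2.
  move=> U V rU rV; rewrite /subspace_dist.
  have := mxrank_sum_cap U V; have := rank_leq_col (U + V)%MS.
  rewrite rU rV; lia.
rewrite card_imset ?card_ord // => i i' e.
apply/eqP; apply/negP => /negP ne.
have sub : (Wj S j i <= Wj S j i')%MS.
  by rewrite -(genmxE (Wj S j i)) e genmxE.
have rc : \rank (Wj S j i :&: Wj S j i')%MS = j by rewrite (capmx_idPl sub) rWj.
case: (leqP j k) => hjk.
  by move: rc; rewrite part1 //; lia.
by move: rc; have [-> _] := part2 hjk _ _ ne; lia.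
Qed.
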